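(* If $S(A)=(a_n)$ is a regular Stanley sequence, then there is a unique choice of constants $\lambda,\sigma$ and independent Stanley sequence $(a'_n)$ such that $(a'_n)$ has character $\lambda$ and, for all sufficiently large $k$ and all $0\le i<2^k$, $a_{2^k-\sigma+i}=a_{2^k-\sigma}+a'_i$ and $a_{2^k-\sigma}=2a_{2^k-\sigma-1}-\lambda+1$.
   Context: A set of non-negative integers is 3-free if no three of its elements form an arithmetic progression. For a finite 3-free set $A=\{a_0<\cdots<a_k\}$ of non-negative integers, the Stanley sequence $S(A)=(a_n)_{n\ge0}$ is the increasing sequence with initial terms $a_0,\ldots,a_k$ in which each subsequent $a_{n+1}$ is the smallest integer greater than $a_n$ such that $\{a_0,\ldots,a_{n+1}\}$ is 3-free. Throughout, Stanley sequences are in root position ($a_0=0$). A Stanley sequence $(a_n)$ is independent with character $\lambda$ if for all sufficiently large $k$: $a_{2^k+i}=a_{2^k}+a_i$ for $0\le i<2^k$, and $a_{2^k}=2a_{2^k-1}-\lambda+1$ (the constant $\lambda$ is then unique). A Stanley sequence $(a_n)$ is regular if there exist constants $\lambda,\sigma$ and an independent Stanley sequence $(a'_n)$ of character $\lambda$ such that for all large $k$ and $0\le i<2^k$: $a_{2^k-\sigma+i}=a_{2^k-\sigma}+a'_i$ and $a_{2^k-\sigma}=2a_{2^k-\sigma-1}-\lambda+1$. *)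

(* Defs.v *)
From mathcomp Require Import all_boot all_order all_algebra.
Set Implicit Arguments. Unset Strict Implicit. Unset Printing Implicit Defensive.
Import Order.TTheory GRing.Theory Num.Theory.

Definition three_free (P : nat -> Prop) : Prop :=
  forall x y z : nat, P x -> P y -> P z -> x < y -> y < z -> x + z <> 2 * y.

Definition prefix_set (a : nat -> nat) (n : nat) : nat -> Prop :=
  fun x => exists i, i <= n /\ a i = x.

(* a is a Stanley sequence in root position: a = S(A) for the finite 3-free
   set A = {a_0 < ... < a_k} with a_0 = 0, i.e. a is increasing, starts at 0,
   its first k+1 terms form a 3-free set, and each subsequent term is the
   least integer greater than the previous one keeping the set 3-free. *)
Definition stanley (a : nat -> nat) : Prop :=
  [/\ a 0 = 0,
      (forall n, a n < a n.+1) &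
      exists k, three_free (prefix_set a k) /\
        forall n, k <= n ->
          three_free (prefix_set a n.+1) /\
          forall m, a n < m -> m < a n.+1 ->
            ~ three_free (fun x => prefix_set a n x \/ x = m)].

Definition independent_char (a : nat -> nat) (lam : int) : Prop :=
  exists K, forall k, K <= k ->
    (forall i, i < 2 ^ k -> a (2 ^ k + i) = a (2 ^ k) + a i) /\
    Posz (a (2 ^ k)) = (2 * Posz (a (2 ^ k).-1) - lam + 1)%R.

(* Index 2^k - sigma (sigma an integer constant; for large k this is positive). *)
Definition shift_idx (sigma : int) (k : nat) : nat := absz (Posz (2 ^ k) - sigma)%R.

Definition regular_data (a : nat -> nat) (lam sigma : int) (a' : nat -> nat) : Prop :=
  [/\ stanley a', independent_char a' lam &
      exists K, forall k, K <= k ->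
        (forall i, i < 2 ^ k ->
           a (shift_idx sigma k + i) = a (shift_idx sigma k) + a' i) /\
        Posz (a (shift_idx sigma k)) =
          (2 * Posz (a (shift_idx sigma k).-1) - lam + 1)%R].

Definition regular (a : nat -> nat) : Prop :=
  exists lam sigma a', regular_data a lam sigma a'.

(* Main.v *)
Require Import Defs.
From mathcomp Require Import all_boot all_order all_algebra.
From mathcomp Require Import zify.
Import Order.TTheory GRing.Theory Num.Theory.

Lemma big_exp B k : (B <= k)%N -> (B < 2 ^ k)%N.
Proof.
move=> h; apply: (leq_trans (ltn_expl B (isT : 1 < 2))).
by rewrite leq_exp2l.
Qed.

Lemma shift_idxE sigma k : (`|sigma|%N < 2 ^ k)%N ->
  Posz (shift_idx sigma k) = (Posz (2 ^ k) - sigma)%R.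
Proof. rewrite /shift_idx => h. lia. Qed.

Lemma strict_mono a : (forall n, a n < a n.+1) -> forall m n, m < n -> a m < a n.
Proof.
move=> h m; elim=> [//|n IH]; rewrite ltnS leq_eqVlt => /orP [/eqP -> //|/IH].
by move=> hm; apply: ltn_trans hm (h n).
Qed.

Lemma key a lam sigma a' lam2 sigma2 a2 : stanley a ->
  regular_data a lam sigma a' -> regular_data a lam2 sigma2 a2 ->
  (sigma2 < sigma)%R -> False.
Proof.
move=> [_ Hinc _] [_ _ [K1 H1]] [_ _ [K2 H2]] lt.
set d := `|sigma - sigma2|%N.
set B := maxn (maxn K1 K2) (`|sigma|%N + `|sigma2|%N + d).+1.
have HN : forall k, (B <= k)%N ->
  [/\ shift_idx sigma2 k = shift_idx sigma k + d, (d < 2 ^ k)%N, (1 <= d)%N,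
     (K1 <= k)%N & (K2 <= k)%N].
  move=> k hk; have hb := big_exp _ _ hk.
  rewrite /B /d in hk hb *.
  have e1 := @shift_idxE sigma k ltac:(lia). have e2 := @shift_idxE sigma2 k ltac:(lia).
  split; lia.
have C : forall k, (B <= k)%N ->
  Posz (a (shift_idx sigma k)) = (Posz (a' d) - 2 * Posz (a' d.-1) + lam2 - 1)%R.
  move=> k hk; have [e hd d1 k1 k2] := HN k hk.
  have [h1 _] := H1 k k1. have [_ h2] := H2 k k2.
  have x1 := h1 d hd. have x2 := h1 d.-1 (leq_ltn_trans (leq_pred d) hd).
  rewrite e in h2. have E : (shift_idx sigma k + d).-1 = shift_idx sigma k + d.-1 by lia.
  rewrite E in h2. rewrite x2 x1 in h2. lia.
have c1 := C B (leqnn B). have c2 := C B.+1 (leqnSn B).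
have : shift_idx sigma B < shift_idx sigma B.+1.
  have hb := big_exp _ _ (leqnn B). have hb2 := big_exp _ _ (leqnSn B).
  have hB : (`|sigma|%N < B)%N by rewrite /B; lia.
  have e1 := @shift_idxE sigma B ltac:(lia). have e2 := @shift_idxE sigma B.+1 ltac:(lia).
  rewrite expnS in hb2 e2. lia.
move/(strict_mono _ Hinc). lia.
Qed.

Theorem mainTheorem7 (a : nat -> nat) :
  stanley a -> regular a ->
  exists (lam sigma : int) (a' : nat -> nat),
    regular_data a lam sigma a' /\
    forall (lam2 sigma2 : int) (a2 : nat -> nat),
      regular_data a lam2 sigma2 a2 ->
      [/\ lam2 = lam, sigma2 = sigma & forall n, a2 n = a' n].
Proof.
move=> Ha [lam [sigma [a' H]]]; exists lam, sigma, a'; split=> // lam2 sigma2 a2 H2.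
have es : sigma2 = sigma.
  case: (ltgtP sigma2 sigma) => // h.
  - by case: (key _ _ _ _ _ _ _ Ha H H2 h).
  - by case: (key _ _ _ _ _ _ _ Ha H2 H h).
subst sigma2.
move: H H2 => [_ _ [K1 H1]] [_ _ [K2 H2]].
have [_ h1] := H1 _ (leq_maxl K1 K2). have [_ h2] := H2 _ (leq_maxr K1 K2).
split=> //; first by lia.
move=> n; set k := maxn (maxn K1 K2) n.
have hk : (n < 2 ^ k)%N by apply: big_exp; rewrite /k leq_maxr.
have [g1 _] := H1 k ltac:(rewrite /k; lia). have [g2 _] := H2 k ltac:(rewrite /k; lia).
have := g1 n hk; rewrite g2 // => /eqP; rewrite eqn_add2l => /eqP //.
Qed.
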